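(* Let $V$ be a finite set, $f:2^V\to\mathbb{R}_+$ nonnegative submodular with $f(\emptyset)=0$, $t_1,\ldots,t_k\in V$ distinct, and $\mathbf{x}=(x_{i,j})_{i\in[k],j\in V}$ with $x_{i,j}\ge0$, $\sum_{i=1}^k x_{i,j}=1$ for all $j\in V$, and $x_{i,t_i}=1$ for all $i$. For $\theta\in[0,1]$ let $A_i(\theta)=\{j: x_{i,j}>\theta\}$, $A(\theta)=\bigcup_{i=1}^k A_i(\theta)$ and $U(\theta)=V\setminus A(\theta)$. Then for any $\delta\in[\tfrac12,1]$, $$\sum_{i=1}^{k-1}\int_0^\delta f\big((A_1(\theta)\cup\cdots\cup A_i(\theta))\cap A_{i+1}(\theta)\big)\,d\theta\ \ge\ \int_0^1 f(U(\theta))\,d\theta.$$ *)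

(* Defs.v *)
From HB Require Import structures.
From mathcomp Require Import all_boot all_order all_algebra.
From mathcomp Require Import all_classical all_reals all_analysis.
Set Implicit Arguments. Unset Strict Implicit. Unset Printing Implicit Defensive.
Import Order.TTheory GRing.Theory Num.Theory.
Local Open Scope ring_scope.

Definition submodular (V : finType) (R : realType) (f : {set V} -> R) :=
  forall A B : {set V}, f (A :|: B) + f (A :&: B) <= f A + f B.

Definition Aset (V : finType) (R : realType) (k : nat)
  (x : 'I_k -> V -> R) (i : 'I_k) (theta : R) : {set V} :=
  [set j | theta < x i j].

Definition Aall (V : finType) (R : realType) (k : nat)
  (x : 'I_k -> V -> R) (theta : R) : {set V} :=
  \bigcup_(i < k) Aset x i theta.

Definition Uset (V : finType) (R : realType) (k : nat)
  (x : 'I_k -> V -> R) (theta : R) : {set V} :=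
  ~: Aall x theta.

(* For 0-based i (1 <= i < k), this is (A_0 u ... u A_{i-1}) n A_i,
   i.e. in the paper's 1-based indexing (A_1 u ... u A_{i'}) n A_{i'+1}
   with i' = i. *)
Definition prefix_cap (V : finType) (R : realType) (k : nat)
  (x : 'I_k -> V -> R) (i : 'I_k) (theta : R) : {set V} :=
  (\bigcup_(j < k | (j < i)%N) Aset x j theta) :&: Aset x i theta.

(* Main.v *)
Require Import Defs.
From HB Require Import structures.
From mathcomp Require Import all_boot all_order all_algebra.
From mathcomp Require Import all_classical all_reals all_analysis.
From mathcomp Require Import lra measurable_realfun.
Import Order.TTheory GRing.Theory Num.Theory.
Local Open Scope ring_scope.

Local Set Implicit Arguments. Local Unset Strict Implicit.


Definition marg (R : realType) (V : finType) (f : {set V} -> R) (s : seq V) (j : V) : R :=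
  f ([set i in take (index j s) s] :|: [set j]) - f [set i in take (index j s) s].

Lemma K1 (R : realType) (V : finType) (f : {set V} -> R) (s : seq V) :
  submodular f -> f finset.set0 = 0 -> uniq s -> forall (T : {set V}) p q, s = p ++ q ->
  \sum_(j in T :&: [set i in p]) marg f s j <= f (T :&: [set i in p]).
Proof.
move=> sm f0 us T p; elim/last_ind: p => [|p a IH] q hs.
  have -> : T :&: [set i in [::]] = finset.set0 by apply/setP => i; rewrite !inE andbF.
  by rewrite big_set0 f0.
have hs' : s = p ++ a :: q by rewrite hs cat_rcons.
have IH' := IH _ hs'.
have anp : a \notin p.
  move: us; rewrite hs' cat_uniq => /and3P[_ H _]; apply: contra H => ap.
  by apply/hasP; exists a => //; rewrite inE eqxx.
have ma : marg f s a = f ([set i in p] :|: [set a]) - f [set i in p].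
  rewrite /marg hs' index_cat (negbTE anp) /= eqxx addn0 take_size_cat //.
have -> : [set i in rcons p a] = a |: [set i in p].
  by apply/setP => i; rewrite !inE mem_rcons inE.
case: (boolP (a \in T)) => aT.
  have -> : T :&: (a |: [set i in p]) = a |: (T :&: [set i in p]).
    by apply/setP => i; rewrite !inE; case: eqP => // ->; rewrite aT.
  rewrite big_setU1 /=; last by rewrite !inE (negbTE anp) andbF.
  have := sm (a |: (T :&: [set i in p])) [set i in p].
  have -> : (a |: (T :&: [set i in p])) :|: [set i in p] = [set i in p] :|: [set a].
    apply/setP => i; rewrite !inE; case: eqP => //= _; by case: (i \in p); rewrite ?andbT ?andbF ?orbT ?orbF.
  have -> : (a |: (T :&: [set i in p])) :&: [set i in p] = T :&: [set i in p].
    apply/setP => i; rewrite !inE; case: eqP => //= [->|_]; first by rewrite (negbTE anp) !andbF.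
    by case: (i \in p); rewrite ?andbT ?andbF.
  rewrite ma; lra.
have -> : T :&: (a |: [set i in p]) = T :&: [set i in p].
  by apply/setP => i; rewrite !inE; case: eqP => // ->; rewrite (negbTE aT).
exact: IH'.
Qed.

Lemma K2 (R : realType) (V : finType) (f : {set V} -> R) (s : seq V) (key : V -> R) (tau : R) :
  f finset.set0 = 0 -> uniq s -> sorted (fun a b => key a <= key b) s ->
  forall p q, s = p ++ q ->
  \sum_(j in [set j | key j <= tau] :&: [set i in p]) marg f s j
    = f ([set j | key j <= tau] :&: [set i in p]).
Proof.
set T := [set j | key j <= tau].
move=> f0 us ss p; elim/last_ind: p => [|p a IH] q hs.
  have -> : T :&: [set i in [::]] = finset.set0 by apply/setP => i; rewrite !inE andbF.
  by rewrite big_set0 f0.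
have hs' : s = p ++ a :: q by rewrite hs cat_rcons.
have IH' := IH _ hs'.
have anp : a \notin p.
  move: us; rewrite hs' cat_uniq => /and3P[_ H _]; apply: contra H => ap.
  by apply/hasP; exists a => //; rewrite inE eqxx.
have ma : marg f s a = f ([set i in p] :|: [set a]) - f [set i in p].
  rewrite /marg hs' index_cat (negbTE anp) /= eqxx addn0 take_size_cat //.
have pa : forall b, b \in p -> key b <= key a.
  move: ss; rewrite (sorted_pairwise (fun m l r => @le_trans _ _ (key m) (key l) (key r))).
  rewrite hs' pairwise_cat => /and3P[H _ _] b bp.
  by move/allrelP: H => /(_ b a bp); rewrite inE eqxx => /(_ isT).
have -> : [set i in rcons p a] = a |: [set i in p].
  by apply/setP => i; rewrite !inE mem_rcons inE.
case: (boolP (a \in T)) => aT.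
  have TP : T :&: [set i in p] = [set i in p].
    apply/setP => i; rewrite !inE; case: (boolP (i \in p)) => ip; rewrite ?andbF ?andbT //.
    by apply: le_trans (pa _ ip) _; move: aT; rewrite inE.
  have -> : T :&: (a |: [set i in p]) = a |: (T :&: [set i in p]).
    by apply/setP => i; rewrite !inE; case: eqP => // ->; move: aT; rewrite inE => ->.
  rewrite big_setU1 /=; last by rewrite !inE (negbTE anp) andbF.
  rewrite IH' TP ma finset.setUC; lra.
have -> : T :&: (a |: [set i in p]) = T :&: [set i in p].
  by apply/setP => i; rewrite !inE; case: eqP => // ->; move: aT; rewrite inE => /negbTE ->.
exact: IH'.
Qed.


Fixpoint PM (R : realType) (b : nat -> R) (m : nat) : R :=
  if m is m'.+1 then Num.max (PM b m') (b m') else 0.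

Lemma PM_ge0 (R : realType) (b : nat -> R) m : (forall l, 0 <= b l) -> 0 <= PM b m.
Proof. by move=> b0; elim: m => //= m IH; rewrite le_max IH. Qed.

Lemma PM_lt (R : realType) (b : nat -> R) m tau : (forall l, 0 <= b l) -> (0 < m)%N ->
  (tau < PM b m) <-> exists2 l, (l < m)%N & tau < b l.
Proof.
move=> b0; elim: m => // m IH _ /=; rewrite lt_max.
case: m IH => [_|m IH].
  split; first by move=> /orP[/= h|h]; exists 0%N => //; apply: lt_le_trans h (b0 0%N).
  by move=> [l]; rewrite ltnS leqn0 => /eqP -> ->; rewrite orbT.
split.
  move=> /orP[/(IH isT)[l lm h]|h]; first by exists l => //; apply: ltnW.
  by exists m.+1.
move=> [l]; rewrite ltnS leq_eqVlt => /orP[/eqP -> ->|lm h]; first by rewrite orbT.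
by apply/orP; left; apply/(IH isT); exists l.
Qed.

Lemma PM_le (R : realType) (b : nat -> R) m tau : (forall l, 0 <= b l) -> (0 < m)%N ->
  (PM b m <= tau) <-> forall l, (l < m)%N -> b l <= tau.
Proof.
move=> b0 m0; rewrite leNgt; split.
  move=> /negP H l lm; rewrite leNgt; apply/negP => h; apply: H.
  by apply/(PM_lt _ b0 m0); exists l.
by move=> H; apply/negP => /(PM_lt _ b0 m0)[l lm]; apply/negP; rewrite -leNgt; apply: H.
Qed.

Lemma PM_ub (R : realType) (b : nat -> R) m c : 0 <= c -> (forall l, (l < m)%N -> b l <= c) ->
  PM b m <= c.
Proof.
move=> c0; elim: m => //= m IH H; rewrite ge_max IH ?H //.
by move=> l lm; apply: H; apply: ltnW.
Qed.

Lemma PM_tel (R : realType) (b : nat -> R) m : (forall l, 0 <= b l) ->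
  \sum_(1 <= l < m) Num.min (PM b l) (b l) = \sum_(0 <= l < m) b l - PM b m.
Proof.
move=> b0; elim: m => [|m IH]; first by rewrite !big_geq // subr0.
case: m IH => [_|m IH].
  rewrite big_geq // big_nat1 /=.
  by rewrite max_r ?subrr.
rewrite big_nat_recr // [in RHS]big_nat_recr //= IH.
have := addr_min_max (PM b m.+1) (b m.+1); lra.
Qed.

Local Open Scope classical_set_scope.
Local Open Scope ring_scope.


Lemma meas_eqset (R : realType) (V : finType) (S : R -> {set V}) (S0 : {set V}) :
  (forall j, measurable [set tau | j \in S tau]) ->
  measurable [set tau | S tau = S0].
Proof.
move=> mS.
have H : forall l : seq V, measurable [set tau | forall j, j \in l -> (j \in S tau) = (j \in S0)].
  elim=> [|a l IH].
    by rewrite (_ : [set _ | _] = setT) //; apply/seteqP; split => tau //= _ j.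
  rewrite (_ : [set _ | _] = [set tau | (a \in S tau) = (a \in S0)] `&`
     [set tau | forall j, j \in l -> (j \in S tau) = (j \in S0)]).
    apply: measurableI => //.
    case: (boolP (a \in S0)) => aS.
      by rewrite (_ : [set _ | _] = [set tau | a \in S tau]) //; apply/seteqP; split => tau /= ->.
    rewrite (_ : [set _ | _] = ~` [set tau | a \in S tau]); first exact: measurableC.
    by apply/seteqP; split => tau /=; [move=> -> | move/negP/negbTE ->].
  apply/seteqP; split => tau /=.
    by move=> H; split; [apply: H; rewrite inE eqxx | move=> j jl; apply: H; rewrite inE jl orbT].
  by move=> [H1 H2] j; rewrite inE => /orP[/eqP ->|]; [|apply: H2].
rewrite (_ : [set _ | _] = [set tau | forall j, j \in enum V -> (j \in S tau) = (j \in S0)]) //.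
apply/seteqP; split => tau /=; first by move=> -> j.
by move=> H1; apply/setP => j; apply: H1; rewrite mem_enum.
Qed.

Lemma meas_comp (R : realType) (V : finType) (S : R -> {set V}) (g : {set V} -> R) (D : set R) :
  (forall j, measurable [set tau | j \in S tau]) ->
  measurable_fun D (fun tau => (g (S tau))%:E).
Proof.
move=> mS; apply/measurable_realfun.measurable_EFinP.
apply: (@measurable_funS _ _ _ _ setT) => //.
rewrite (_ : (fun tau => g (S tau)) = fun tau => \sum_(S0 : {set V}) g S0 * \1_[set tau | S tau = S0] tau).
  apply: measurable_sum => S0; apply: measurable_funM; first exact: measurable_cst.
  by apply: measurable_indic; apply: meas_eqset.
apply/funext => tau; rewrite (bigD1 (S tau)) //= big1 ?addr0.
  by rewrite indicE mem_set // mulr1.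
by move=> S0 /eqP HS; rewrite indicE memNset ?mulr0 //= => /esym.
Qed.


Lemma int_sum (R : realType) (V : finType) (D : set R) (I : V -> set R) (c : V -> R) :
  measurable D -> (forall j, measurable (I j)) -> (forall j, 0 <= c j) ->
  (\int[lebesgue_measure]_(tau in D) (\sum_(j : V) c j * \1_(I j) tau)%:E
   = \sum_(j : V) (c j)%:E * lebesgue_measure (I j `&` D))%E.
Proof.
move=> mD mI c0.
under eq_integral do rewrite -sumEFin.
rewrite ge0_integral_sum //.
- apply: eq_bigr => j _.
  under eq_integral do rewrite EFinM.
  have mf : measurable_fun D (fun tau => (\1_(I j) tau : R)%:E).
    by apply/measurable_realfun.measurable_EFinP; apply: measurable_indic.
  have pos : forall tau, D tau -> (0 <= (\1_(I j) tau : R)%:E)%E.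
    by move=> tau _; rewrite indicE lee_fin.
  by rewrite ge0_integralZl_EFin // integral_indic //; exact: mI.
- move=> j; apply/measurable_realfun.measurable_EFinP.
  apply: (@measurable_funM _ _ _ _ (fun=> c j) (\1_(I j) : R -> R)); first exact: measurable_cst.
  exact: measurable_indic.
- by move=> j tau _; rewrite lee_fin mulr_ge0 // indicE.
Qed.

Lemma meas1 (R : realType) (y d : R) : 0 <= y -> y <= d ->
  lebesgue_measure ([set tau | tau < y] `&` `[0, d]) = y%:E.
Proof.
move=> y0 yd.
rewrite (_ : _ `&` _ = [set` `[0, y[]).
  rewrite lebesgue_measure_itv /= lte_fin.
  case: ltP => [_|]; first by rewrite -EFinD subr0.
  by move=> y0'; have -> : y = 0 by apply/le_anti; rewrite y0 y0'.
apply/seteqP; split => tau /=; rewrite !in_itv /=.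
  by move=> [-> /andP[-> _]].
by move=> /andP[t0 ty]; split => //; rewrite t0 /=; apply: le_trans yd; apply: ltW.
Qed.

Lemma meas2 (R : realType) (M : R) : 0 <= M -> M <= 1 ->
  lebesgue_measure ([set tau | M <= tau] `&` `[0, 1]) = (1 - M)%:E.
Proof.
move=> M0 M1.
rewrite (_ : _ `&` _ = [set` `[M, 1]]).
  rewrite lebesgue_measure_itv /= lte_fin.
  case: ltP => [_|]; first by rewrite -EFinD.
  move=> M1'; have -> : M = 1 by apply/le_anti; rewrite M1 M1'.
  by rewrite subrr.
apply/seteqP; split => tau /=; rewrite !in_itv /=.
  by move=> [-> /andP[_ ->]].
by move=> /andP[t0 ty]; split => //; rewrite ty andbT; apply: le_trans t0.
Qed.

Lemma min_half (R : realType) (u v d : R) : u <= 1 - v -> 2^-1 <= d -> Num.min u v <= d.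
Proof.
move=> hu hd; rewrite ge_min; apply/orP; case: (lerP v (2^-1)) => h; [right|left]; lra.
Qed.

Lemma le_subr (R : realType) (a v : R) : a + v <= 1 -> a <= 1 - v.
Proof. move=> h; lra. Qed.

Lemma le_sum_aux (R : realType) (a b c : R) : a - b <= c -> a <= c + b.
Proof. move=> h; lra. Qed.

Lemma add_sub_aux (R : realType) (a b c : R) : a - b = c -> c + b = a.
Proof. move=> h; lra. Qed.

Local Unset Implicit Arguments.

Theorem lemma4 (R : realType) (V : finType) (f : {set V} -> R) (k : nat)
  (t : 'I_k -> V) (x : 'I_k -> V -> R) (delta : R) :
  (forall S : {set V}, 0 <= f S) ->
  submodular f ->
  f (finset.set0 : {set V}) = 0 ->
  injective t ->
  (forall i j, 0 <= x i j) ->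
  (forall j, \sum_(i < k) x i j = 1) ->
  (forall i, x i (t i) = 1) ->
  2^-1 <= delta -> delta <= 1 ->
  (\sum_(i < k | (0 < i)%N)
     \int[lebesgue_measure]_(theta in `[0%R, delta])
        (f (prefix_cap x i theta))%:E
   >= \int[lebesgue_measure]_(theta in `[0%R, 1%R]) (f (Uset x theta))%:E)%E.
Proof.
move=> f0 sm fe0 _ x0 xs1 _ dge dle.
pose b j l := oapp (fun i => x i j) 0 (insub l : option 'I_k).
have b0 : forall j l, 0 <= b j l.
  by move=> j l; rewrite /b; case: (insub l) => //=.
have bval : forall j (i : 'I_k), b j i = x i j by move=> j i; rewrite /b valK.
have k0 : forall j : V, (0 < k)%N.
  move=> j; rewrite lt0n; apply/negP => /eqP hk; move: (xs1 j).
  rewrite big1; first by move/eqP; rewrite eq_sym oner_eq0.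
  by move=> i _; have := ltn_ord i; rewrite [in X in (_ < X)%N]hk.
have sumb : forall j, \sum_(0 <= l < k) b j l = 1.
  by move=> j; rewrite big_mkord -(xs1 j); apply: eq_bigr => i _; rewrite bval.
have xle1 : forall i j, x i j <= 1.
  move=> i j; rewrite -(xs1 j) (bigD1 i) //= lerDl; exact: sumr_ge0.
have pair : forall i i' j, i != i' -> x i j + x i' j <= 1.
  move=> i i' j ii'; rewrite -(xs1 j) (bigD1 i) //= (bigD1 i') 1?eq_sym //= addrA lerDl.
  exact: sumr_ge0.
pose Mj j := PM (b j) k.
have M0 : forall j, 0 <= Mj j by move=> j; apply: PM_ge0.
have M1 : forall j, Mj j <= 1.
  move=> j; apply: PM_ub => // l lk; rewrite (_ : b j l = x (Ordinal lk) j) ?xle1 //.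
  by rewrite -bval.
pose y (i : 'I_k) j := Num.min (PM (b j) i) (x i j).
have y0 : forall i j, 0 <= y i j by move=> i j; rewrite le_min x0 andbT; apply: PM_ge0.
have yd : forall i j, y i j <= delta.
  move=> i j.
  have hu : PM (b j) i <= 1 - x i j.
    apply: PM_ub; first by rewrite subr_ge0.
    move=> l li; have lk : (l < k)%N by apply: ltn_trans li (ltn_ord i).
    rewrite (_ : b j l = x (Ordinal lk) j); last by rewrite -bval.
    have : Ordinal lk != i by rewrite -val_eqE /= neq_ltn li.
    by move/(pair _ _ j); apply: le_subr.
  exact: min_half.
have ysum : forall j, \sum_(i < k | (0 < i)%N) y i j = 1 - Mj j.
  move=> j.
  transitivity (\sum_(i < k | (0 < i)%N) Num.min (PM (b j) i) (b j i)).
    by apply: eq_bigr => i _; rewrite /y bval.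
  rewrite -(big_mkord (fun l => (0 < l)%N) (fun l => Num.min (PM (b j) l) (b j l))).
  rewrite big_ltn_cond ?k0 //= -(sumb j) -PM_tel //.
  rewrite big_nat_cond [in RHS]big_nat_cond; apply: eq_bigl => l.
  by case: l => [|l] //=; rewrite !andbT.
pose s := sort (fun a c : V => Mj a <= Mj c) (enum V).
have us : uniq s by rewrite sort_uniq enum_uniq.
have ss : sorted (fun a c : V => Mj a <= Mj c) s.
  by apply: sort_sorted => a c; apply: le_total.
have allin : forall T : {set V}, T :&: [set i in s]%SET = T.
  by move=> T; apply/setP => j; rewrite !inE mem_sort mem_enum andbT.
pose m := marg f s.
pose p j := Num.max (m j) 0.
pose q j := p j - m j.
have p0 : forall j, 0 <= p j by move=> j; rewrite le_max lexx orbT.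
have q0 : forall j, 0 <= q j by move=> j; rewrite subr_ge0 le_max lexx.
have memP : forall (i : 'I_k), (0 < i)%N -> forall tau j,
    (j \in prefix_cap x i tau) = (tau < y i j).
  move=> i i0 tau j; rewrite /prefix_cap !inE lt_min; congr (_ && _).
  apply/bigcupP/idP.
    move=> [i' i'i]; rewrite inE => h; apply/(PM_lt _ (b0 j) i0); exists i' => //.
    by rewrite bval.
  move=> /(PM_lt _ (b0 j) i0)[l li h]; have lk : (l < k)%N by apply: ltn_trans li (ltn_ord i).
  by exists (Ordinal lk) => //; rewrite inE -bval.
have memU : forall tau j, (j \in Uset x tau) = (Mj j <= tau).
  move=> tau j; rewrite /Uset /Aall inE; apply/idP/idP.
    move=> H; apply/(PM_le _ (b0 j) (k0 j)) => l lk.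
    rewrite (_ : b j l = x (Ordinal lk) j); last by rewrite -bval.
    rewrite leNgt; apply: contra H => h; apply/bigcupP; exists (Ordinal lk) => //.
    by rewrite inE.
  move=> /(PM_le _ (b0 j) (k0 j)) H; apply/bigcupP => -[i _]; rewrite inE; apply/negP.
  by rewrite -leNgt -bval; apply: H.
have mIy : forall i j, measurable [set tau : R | tau < y i j].
  move=> i j; rewrite (_ : [set tau : R | tau < y i j] = [set` `]-oo, y i j[]).
    exact: measurable_itv.
  by apply/seteqP; split => tau /=; rewrite in_itv.
have mJ : forall j, measurable [set tau : R | Mj j <= tau].
  move=> j; rewrite (_ : [set tau : R | Mj j <= tau] = [set` `[Mj j, +oo[]).
    exact: measurable_itv.
  by apply/seteqP; split => tau /=; rewrite in_itv /= andbT.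
have msum : forall (I : V -> set R) (c : V -> R) (D : set R), (forall j, measurable (I j)) ->
    measurable_fun D (fun tau => \sum_(j : V) c j * \1_(I j) tau).
  move=> I c D mI; apply: measurable_sum => j.
  apply: (@measurable_funM _ _ _ _ (fun=> c j) (\1_(I j) : R -> R)); first exact: measurable_cst.
  exact: measurable_indic.
have ineq : forall i : 'I_k, (0 < i)%N ->
    (\int[lebesgue_measure]_(tau in `[0%R, delta]) (f (prefix_cap x i tau))%:E
     + (\sum_(j : V) q j * y i j)%:E >= (\sum_(j : V) p j * y i j)%:E)%E.
  move=> i i0.
  have e1 : forall c : V -> R, (forall j, 0 <= c j) -> (\sum_(j : V) c j * y i j)%:E =
      (\int[lebesgue_measure]_(tau in `[0%R, delta])
         (\sum_(j : V) c j * \1_[set tau : R | tau < y i j] tau)%:E)%E.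
    move=> c c0; rewrite int_sum // -sumEFin; apply: eq_bigr => j _.
    by rewrite meas1 // EFinM.
  have mfP : measurable_fun `[0%R, delta] (fun tau => (f (prefix_cap x i tau))%:E).
    apply: meas_comp => j.
    rewrite (_ : [set tau | j \in prefix_cap x i tau] = [set tau : R | tau < y i j]) //.
    by apply/seteqP; split => tau /=; rewrite memP.
  have mD : measurable (`[0%R, delta] : set R) by exact: measurable_itv.
  have mQ : forall c : V -> R, measurable_fun `[0%R, delta]
      (fun tau => (\sum_(j : V) c j * \1_[set tau : R | tau < y i j] tau)%:E).
    by move=> c; apply/measurable_realfun.measurable_EFinP; apply: msum.
  have pQ : forall c : V -> R, (forall j, 0 <= c j) -> forall tau, [set` `[0%R, delta]] tau ->
      (0 <= (\sum_(j : V) c j * \1_[set tau : R | tau < y i j] tau)%:E)%E.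
    by move=> c c0 tau _; rewrite lee_fin; apply: sumr_ge0 => j _; rewrite mulr_ge0 // indicE.
  have pF : forall tau, [set` `[0%R, delta]] tau -> (0 <= (f (prefix_cap x i tau))%:E)%E.
    by move=> tau _; rewrite lee_fin.
  rewrite !e1 // -ge0_integralD //; [|exact: (pQ q q0)|exact: (mQ q)].
  apply: ge0_le_integral => //; [exact: (pQ p p0)|exact: (mQ p)|exact: emeasurable_funD mfP (mQ q)|].
  move=> tau _; rewrite -EFinD lee_fin.
  have K := K1 sm fe0 us (prefix_cap x i tau) (esym (cats0 s)).
  rewrite allin in K.
  have E : \sum_(j : V) p j * \1_[set tau : R | tau < y i j] tau
         - \sum_(j : V) q j * \1_[set tau : R | tau < y i j] tau
         = \sum_(j in prefix_cap x i tau) m j.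
    rewrite -sumrB [RHS]big_mkcond; apply: eq_bigr => j _.
    rewrite -mulrBl /q opprB addrC subrK memP //.
    case h: (tau < y i j).
      by rewrite indicE mem_set // mulr1.
    by rewrite indicE memNset ?mulr0 //= h.
  move: K; rewrite -E; apply: le_sum_aux.
have eqR : (\int[lebesgue_measure]_(tau in `[0%R, 1%R]) (f (Uset x tau))%:E
     + (\sum_(j : V) q j * (1 - Mj j))%:E = (\sum_(j : V) p j * (1 - Mj j))%:E)%E.
  have e2 : forall c : V -> R, (forall j, 0 <= c j) -> (\sum_(j : V) c j * (1 - Mj j))%:E =
      (\int[lebesgue_measure]_(tau in `[0%R, 1%R])
         (\sum_(j : V) c j * \1_[set tau : R | Mj j <= tau] tau)%:E)%E.
    move=> c c0; rewrite int_sum // -sumEFin; apply: eq_bigr => j _.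
    by rewrite meas2 // EFinM.
  have mD : measurable (`[(0:R), (1:R)] : set R) by exact: measurable_itv.
  have mQ : forall c : V -> R, measurable_fun (`[(0:R), (1:R)] : set R)
      (fun tau => (\sum_(j : V) c j * \1_[set tau : R | Mj j <= tau] tau)%:E).
    by move=> c; apply/measurable_realfun.measurable_EFinP; apply: msum.
  have pQ : forall c : V -> R, (forall j, 0 <= c j) -> forall tau, [set` `[(0:R), (1:R)]] tau ->
      (0 <= (\sum_(j : V) c j * \1_[set tau : R | Mj j <= tau] tau)%:E)%E.
    by move=> c c0 tau _; rewrite lee_fin; apply: sumr_ge0 => j _; rewrite mulr_ge0 // indicE.
  have pF : forall tau, [set` `[(0:R), (1:R)]] tau -> (0 <= (f (Uset x tau))%:E)%E.
    by move=> tau _; rewrite lee_fin.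
  have mfU : measurable_fun (`[(0:R), (1:R)] : set R) (fun tau => (f (Uset x tau))%:E).
    apply: meas_comp => j.
    rewrite (_ : [set tau | j \in Uset x tau] = [set tau : R | Mj j <= tau]) //.
    by apply/seteqP; split => tau /=; rewrite memU.
  rewrite !e2 // -ge0_integralD //; [|exact: (pQ q q0)|exact: (mQ q)].
  apply: eq_integral => tau _; rewrite -EFinD; congr EFin.
  have K := @K2 R V f s Mj tau fe0 us ss s [::] (esym (cats0 s)).
  rewrite allin in K.
  have -> : Uset x tau = [set j | Mj j <= tau]%SET by apply/setP => j; rewrite memU inE.
  rewrite -K.
  have E : \sum_(j : V) p j * \1_[set tau : R | Mj j <= tau] tau
         - \sum_(j : V) q j * \1_[set tau : R | Mj j <= tau] tau
         = \sum_(j in [set j | Mj j <= tau]%SET) m j.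
    rewrite -sumrB [RHS]big_mkcond; apply: eq_bigr => j _.
    rewrite -mulrBl /q opprB addrC subrK inE.
    case h: (Mj j <= tau).
      by rewrite indicE mem_set // mulr1.
    by rewrite indicE memNset ?mulr0 //= h.
  by rewrite -E; apply: add_sub_aux.
have S1 : (\sum_(i < k | (0 < i)%N) (\sum_(j : V) p j * y i j)%:E <=
    \sum_(i < k | (0 < i)%N)
      (\int[lebesgue_measure]_(tau in `[0%R, delta]) (f (prefix_cap x i tau))%:E
       + (\sum_(j : V) q j * y i j)%:E))%E.
  by apply: lee_sum => i i0; apply: ineq.
have swap : forall c : V -> R, \sum_(i < k | (0 < i)%N) \sum_(j : V) c j * y i j
    = \sum_(j : V) c j * (1 - Mj j).
  move=> c; rewrite exchange_big; apply: eq_bigr => j _.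
  by rewrite -ysum mulr_sumr.
rewrite big_split /= !sumEFin !swap in S1.
move: eqR => /(congr1 (fun z => z - (\sum_(j : V) q j * (1 - Mj j))%:E)%E).
rewrite addeK // => ->.
by rewrite leeBlDr.
Qed.
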